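(* Let $\mathbf L=(L,\le,\wedge,\vee,0,1,\nu)$ be a bounded lattice with an antitone map $\nu$, and let $\mathbb V$ be one of the varieties $\mathbb M,\mathbb G,\mathbb{INV},\mathbb{DMA},\mathbb O,\mathbb{BA}$. If $\mathbf L\in\mathbb V$, then the full complex algebra $(\mathcal G(X),\subseteq,\bigcap,\bigvee,\emptyset,X,(\cdot)^* )$ of its canonical frame (which is a canonical extension of $\mathbf L$ with $(\cdot)^*$ the $\pi$-extension of $\nu$) also belongs to $\mathbb V$. Thus each of these varieties is closed under canonical extensions.
   Context: Varieties: $\mathbb M$: bounded lattices with antitone $\nu$, $\nu0=1$, $\nu(a\vee b)=\nu a\wedge\nu b$; $\mathbb G$: $\mathbb M$ plus $a\le\nu\nu a$; $\mathbb{INV}$: $\nu$ an antitone involution ($\nu\nu a=a$); $\mathbb{DMA}$: $\mathbb{INV}$ plus distributivity (De Morgan algebras); $\mathbb O$: $\mathbb{INV}$ plus $a\wedge\nu a=0$ (ortholattices); $\mathbb{BA}$: Boolean algebras with $\nu$ the complement. Canonical frame of $\mathbf L$: $X$ the proper filters, $Y$ the proper ideals, $x\parallel y$ iff $x\cap y\neq\emptyset$; $\widehat\nu(x)$ is the ideal generated by $\{\nu a:a\in x\}$; $yS_\vee x$ iff $\widehat\nu(x)\subseteq y$. For $U\subseteq X$, $U'=\{y:\forall x\in U\;x\parallel y\}$; for $V\subseteq Y$, $V'=\{x:\forall y\in V\;x\parallel y\}$; $\mathcal G(X)=\{A\subseteq X:A=A''\}$ with meets = intersections, joins $(\bigcup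 A_j)''$. $x\perp z$ iff $\forall y(yS_\vee z\Rightarrow x\parallel y)$; $A^*=\{x:\forall z\in A\;x\perp z\}$. *)

(* Defs.v *)
From mathcomp Require Import all_boot all_order.
Set Implicit Arguments. Unset Strict Implicit. Unset Printing Implicit Defensive.
Import Order.TTheory.
Local Open Scope order_scope.

Record bounded_lattice (T : Type) (C : T -> Prop) (le : T -> T -> Prop)
    (meet join : T -> T -> T) (bot top : T) : Prop := {
  bl_bot : C bot;
  bl_top : C top;
  bl_meetC : forall a b, C a -> C b -> C (meet a b);
  bl_joinC : forall a b, C a -> C b -> C (join a b);
  bl_refl : forall a, C a -> le a a;
  bl_anti : forall a b, C a -> C b -> le a b -> le b a -> a = b;
  bl_trans : forall a b c, C a -> C b -> C c -> le a b -> le b c -> le a c;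
  bl_meetl : forall a b, C a -> C b -> le (meet a b) a;
  bl_meetr : forall a b, C a -> C b -> le (meet a b) b;
  bl_meetg : forall a b c, C a -> C b -> C c -> le c a -> le c b -> le c (meet a b);
  bl_joinl : forall a b, C a -> C b -> le a (join a b);
  bl_joinr : forall a b, C a -> C b -> le b (join a b);
  bl_joinl_ : forall a b c, C a -> C b -> C c -> le a c -> le b c -> le (join a b) c;
  bl_botP : forall a, C a -> le bot a;
  bl_topP : forall a, C a -> le a top
}.

Inductive variety := VM | VG | VINV | VDMA | VO | VBA.

Definition nu_closed (T : Type) (C : T -> Prop) (nu : T -> T) :=
  forall a, C a -> C (nu a).

Definition distributive_on (T : Type) (C : T -> Prop) (meet join : T -> T -> T) :=
  forall a b c, C a -> C b -> C c -> meet a (join b c) = join (meet a b) (meet a c).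

Definition M_axioms (T : Type) (C : T -> Prop) (le : T -> T -> Prop)
    (meet join : T -> T -> T) (bot top : T) (nu : T -> T) : Prop :=
  nu_closed C nu /\
  (forall a b, C a -> C b -> le a b -> le (nu b) (nu a)) /\
  nu bot = top /\
  (forall a b, C a -> C b -> nu (join a b) = meet (nu a) (nu b)).

Definition in_variety (V : variety) (T : Type) (C : T -> Prop)
    (le : T -> T -> Prop) (meet join : T -> T -> T) (bot top : T)
    (nu : T -> T) : Prop :=
  bounded_lattice C le meet join bot top /\
  match V with
  | VM => M_axioms C le meet join bot top nu
  | VG => M_axioms C le meet join bot top nu /\
          (forall a, C a -> le a (nu (nu a)))
  | VINV => M_axioms C le meet join bot top nu /\
          (forall a, C a -> nu (nu a) = a)
  | VDMA => M_axioms C le meet join bot top nu /\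
          (forall a, C a -> nu (nu a) = a) /\ distributive_on C meet join
  | VO => M_axioms C le meet join bot top nu /\
          (forall a, C a -> nu (nu a) = a) /\
          (forall a, C a -> meet a (nu a) = bot)
  | VBA => nu_closed C nu /\ distributive_on C meet join /\
          (forall a, C a -> meet a (nu a) = bot /\ join a (nu a) = top)
  end.

Section Frame.
Context {d : Order.disp_t} {L : tbLatticeType d}.

Definition is_filter (x : L -> Prop) : Prop :=
  x \top /\ (forall a b, x a -> a <= b -> x b) /\
  (forall a b, x a -> x b -> x (a `&` b)).
Definition is_ideal (y : L -> Prop) : Prop :=
  y \bot /\ (forall a b, y b -> a <= b -> y a) /\
  (forall a b, y a -> y b -> y (a `|` b)).

Definition proper_filter (x : L -> Prop) := is_filter x /\ ~ x \bot.
Definition proper_ideal (y : L -> Prop) := is_ideal y /\ ~ y \top.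

Definition FX := {x : L -> Prop | proper_filter x}.
Definition FY := {y : L -> Prop | proper_ideal y}.

Definition par (x : FX) (y : FY) : Prop :=
  exists a, proj1_sig x a /\ proj1_sig y a.

Definition gen_ideal (S : L -> Prop) : L -> Prop :=
  fun b => forall I, is_ideal I -> (forall c, S c -> I c) -> I b.

Definition nuhat (nu : L -> L) (x : FX) : L -> Prop :=
  gen_ideal (fun c => exists a, proj1_sig x a /\ c = nu a).

Definition Svee (nu : L -> L) (y : FY) (x : FX) : Prop :=
  forall b, nuhat nu x b -> proj1_sig y b.

Definition primeX (U : FX -> Prop) : FY -> Prop :=
  fun y => forall x, U x -> par x y.
Definition primeY (V : FY -> Prop) : FX -> Prop :=
  fun x => forall y, V y -> par x y.

Definition stable (A : FX -> Prop) : Prop := A = primeY (primeX A).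

Definition perp (nu : L -> L) (x z : FX) : Prop :=
  forall y, Svee nu y z -> par x y.

Definition gstar (nu : L -> L) (A : FX -> Prop) : FX -> Prop :=
  fun x => forall z, A z -> perp nu x z.

Definition gsub (A B : FX -> Prop) : Prop := forall x, A x -> B x.
Definition gmeet (A B : FX -> Prop) : FX -> Prop := fun x => A x /\ B x.
Definition gjoin (A B : FX -> Prop) : FX -> Prop :=
  primeY (primeX (fun x => A x \/ B x)).
Definition gbot : FX -> Prop := fun _ => False.
Definition gtop : FX -> Prop := fun _ => True.

End Frame.

(* Main.v *)
Require Import Defs.
From mathcomp Require Import all_boot all_order.
From Stdlib Require Import Classical FunctionalExtensionality PropExtensionality.

Import Order.TTheory.
Local Open Scope order_scope.

Lemma pext {d} {L : tbLatticeType d} (A B : @FX d L -> Prop) :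
  (forall x, A x <-> B x) -> A = B.
Proof.
move=> H; apply: functional_extensionality => x.
apply: propositional_extensionality; exact: H.
Qed.

Lemma fx_top {d} {L : tbLatticeType d} (x : @FX d L) : proj1_sig x \top.
Proof. destruct x as [P [[H H1] H2]]; simpl; exact: H. Qed.
Lemma fx_up {d} {L : tbLatticeType d} (x : @FX d L) a b :
  proj1_sig x a -> a <= b -> proj1_sig x b.
Proof. destruct x as [P [[H0 [H H1]] H2]]; simpl; exact: H. Qed.
Lemma fx_meet {d} {L : tbLatticeType d} (x : @FX d L) a b :
  proj1_sig x a -> proj1_sig x b -> proj1_sig x (a `&` b).
Proof. destruct x as [P [[H0 [H1 H]] H2]]; simpl; exact: H. Qed.
Lemma fx_nbot {d} {L : tbLatticeType d} (x : @FX d L) : ~ proj1_sig x \bot.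
Proof. destruct x as [P [H0 H]]; simpl; exact: H. Qed.
Lemma fy_down {d} {L : tbLatticeType d} (y : @FY d L) a b :
  proj1_sig y b -> a <= b -> proj1_sig y a.
Proof. destruct y as [P [[H0 [H H1]] H2]]; simpl; exact: H. Qed.
Lemma fy_join {d} {L : tbLatticeType d} (y : @FY d L) a b :
  proj1_sig y a -> proj1_sig y b -> proj1_sig y (a `|` b).
Proof. destruct y as [P [[H0 [H1 H]] H2]]; simpl; exact: H. Qed.
Lemma fy_ntop {d} {L : tbLatticeType d} (y : @FY d L) : ~ proj1_sig y \top.
Proof. destruct y as [P [H0 H]]; simpl; exact: H. Qed.
Lemma fy_bot {d} {L : tbLatticeType d} (y : @FY d L) : proj1_sig y \bot.
Proof. destruct y as [P [[H H1] H2]]; simpl; exact: H. Qed.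

Lemma sub_cl {d} {L : tbLatticeType d} (U : @FX d L -> Prop) :
  gsub U (primeY (primeX U)).
Proof. move=> x Ux y Hy; exact: Hy x Ux. Qed.

Lemma cl_mono {d} {L : tbLatticeType d} (U W : @FX d L -> Prop) :
  gsub U W -> gsub (primeY (primeX U)) (primeY (primeX W)).
Proof. move=> H x Hx y Hy; apply: Hx => x' Ux'; exact: Hy x' (H x' Ux'). Qed.

Lemma cl_least {d} {L : tbLatticeType d} (S U : @FX d L -> Prop) :
  stable S -> gsub U S -> gsub (primeY (primeX U)) S.
Proof. move=> HS HU x Hx; rewrite HS; exact: cl_mono HU x Hx. Qed.

Lemma stable_cl {d} {L : tbLatticeType d} (U : @FX d L -> Prop) :
  stable (primeY (primeX U)).
Proof.
apply: pext => x; split; first exact: sub_cl.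
move=> Hx y Hy; apply: Hx => x' Hx'; exact: Hx' y Hy.
Qed.

Lemma stable_up {d} {L : tbLatticeType d} (A : @FX d L -> Prop) x x' :
  stable A -> A x -> (forall a, proj1_sig x a -> proj1_sig x' a) -> A x'.
Proof.
move=> HA Ax Hs; rewrite HA => y Hy.
have [a [xa ya]] := Hy x Ax; exists a; split => //; exact: Hs.
Qed.

Lemma G_bl {d} {L : tbLatticeType d} :
  bounded_lattice (@stable d L) (@gsub d L) (@gmeet d L) (@gjoin d L)
    (@gbot d L) (@gtop d L).
Proof.
split.
- apply: pext => x; split => // Hx.
  have Hp : proper_ideal (fun b : L => b <= \bot).
    split; [split; [|split]|].
    + exact: lexx.
    + move=> a b H1 H2; exact: le_trans H2 H1.
    + move=> a b H1 H2; rewrite leUx H1 H2 //.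
    + move=> H; apply (fx_nbot x); exact: fx_up (fx_top x) H.
  have [a [xa /= le]] := Hx (exist _ _ Hp) (fun x' F => False_ind _ F).
  apply (fx_nbot x); exact: fx_up xa le.
- apply: pext => x; split => // _ y Hy; exact: Hy x I.
- move=> A B HA HB; apply: pext => x; split; first exact: sub_cl.
  move=> Hx; split.
  + rewrite HA; exact: cl_mono (fun _ h => proj1 h) x Hx.
  + rewrite HB; exact: cl_mono (fun _ h => proj2 h) x Hx.
- move=> A B _ _; exact: stable_cl.
- by move=> A _ x.
- move=> A B _ _ H1 H2; apply: pext => x; split; [exact: H1|exact: H2].
- move=> A B C _ _ _ H1 H2 x Hx; exact: H2 _ (H1 _ Hx).
- by move=> A B _ _ x [].
- by move=> A B _ _ x [].
- move=> A B C _ _ _ H1 H2 x Hx; split; [exact: H1|exact: H2].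
- move=> A B _ _ x Ax; exact: sub_cl (or_introl Ax).
- move=> A B _ _ x Bx; exact: sub_cl (or_intror Bx).
- move=> A B C _ _ HC H1 H2; apply: cl_least HC _ => x [h|h]; [exact: H1|exact: H2].
- by move=> A _ x.
- by move=> A _ x.
Qed.

Lemma perp_char {d} {L : tbLatticeType d} {nu : L -> L}
  (Hanti : forall a b : L, a <= b -> nu b <= nu a) (x z : @FX d L) :
  perp nu x z <-> exists c, proj1_sig z c /\ proj1_sig x (nu c).
Proof.
split; last first.
  move=> [c [zc xnc]] y Hy; exists (nu c); split => //; apply: Hy.
  move=> I HI Hgen; apply: Hgen; by exists c.
move=> Hp; apply: NNPP => Hn.
pose E := fun b : L => exists c, proj1_sig z c /\ b <= nu c.
have HE : proper_ideal E.
  split; [split; [|split]|].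
  - exists \top; split; [exact: fx_top | exact: le0x].
  - move=> a b [c [zc le]] ab; exists c; split => //; exact: le_trans ab le.
  - move=> a b [c1 [z1 l1]] [c2 [z2 l2]]; exists (c1 `&` c2); split.
      exact: fx_meet.
    rewrite leUx; apply/andP; split.
    + apply: le_trans l1 _; apply: Hanti; exact: leIl.
    + apply: le_trans l2 _; apply: Hanti; exact: leIr.
  - move=> [c [zc le]]; apply: Hn; exists c; split => //.
    exact: fx_up (fx_top x) le.
have HS : Svee nu (exist _ E HE) z.
  move=> b Hb; apply: Hb (proj1 HE) _ => c [a [za ->]].
  exists a; split => //; exact: lexx.
have [a [xa [c [zc le]]]] := Hp _ HS.
apply: Hn; exists c; split => //; exact: fx_up xa le.
Qed.

Lemma star_stable {d} {L : tbLatticeType d} {nu : L -> L} (A : @FX d L -> Prop) :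
  stable (gstar nu A).
Proof.
apply: pext => x; split; first exact: sub_cl.
move=> Hx z Az y Hy; apply: Hx => x' Hx'; exact: Hx' z Az y Hy.
Qed.

Lemma star_cl {d} {L : tbLatticeType d} {nu : L -> L}
  (Hanti : forall a b : L, a <= b -> nu b <= nu a)
  (Hbot : nu \bot = \top) (Hjoin : forall a b, nu (a `|` b) = nu a `&` nu b)
  (U : @FX d L -> Prop) :
  gsub (gstar nu U) (gstar nu (primeY (primeX U))).
Proof.
move=> x Hx z Hz; apply/(perp_char Hanti x z); apply: NNPP => Hn.
pose D := fun c : L => proj1_sig x (nu c).
have HD : proper_ideal D.
  split; [split; [|split]|].
  - rewrite /D Hbot; exact: fx_top.
  - move=> a b Db ab; exact: fx_up Db (Hanti _ _ ab).
  - move=> a b Da Db; rewrite /D Hjoin; exact: fx_meet.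
  - move=> Dt; apply: Hn; exists \top; split => //; exact: fx_top.
have [c [zc Dc]] := Hz (exist _ D HD) (fun z' Hz' =>
  match proj1 (perp_char Hanti x z') (Hx z' Hz') with
  | ex_intro c (conj zc xc) => ex_intro _ c (conj zc xc) end).
apply: Hn; by exists c.
Qed.

Lemma star_M {d} {L : tbLatticeType d} {nu : L -> L}
  (Hanti : forall a b : L, a <= b -> nu b <= nu a)
  (Hbot : nu \bot = \top) (Hjoin : forall a b, nu (a `|` b) = nu a `&` nu b) :
  M_axioms (@stable d L) (@gsub d L) (@gmeet d L) (@gjoin d L)
    (@gbot d L) (@gtop d L) (gstar nu).
Proof.
split; [|split; [|split]].
- move=> A _; exact: star_stable.
- move=> A B _ _ H x Hx z Az; exact: Hx z (H z Az).
- by apply: pext => x; split => // _ z.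
- move=> A B _ _; apply: pext => x; split.
  + move=> Hx; split => z Hz; apply: Hx.
    * exact: sub_cl (or_introl Hz).
    * exact: sub_cl (or_intror Hz).
  + move=> [HA HB]; apply: (star_cl Hanti Hbot Hjoin) => z [Hz|Hz];
      [exact: HA|exact: HB].
Qed.

Lemma star_G {d} {L : tbLatticeType d} {nu : L -> L}
  (Hanti : forall a b : L, a <= b -> nu b <= nu a)
  (Hg : forall a, a <= nu (nu a)) (A : @FX d L -> Prop) :
  gsub A (gstar nu (gstar nu A)).
Proof.
move=> x Ax z Hz; apply/(perp_char Hanti x z).
have [c [xc znc]] := proj1 (perp_char Hanti z x) (Hz x Ax).
exists (nu c); split => //; exact: fx_up xc (Hg c).
Qed.

Lemma inv_meet {d} {L : tbLatticeType d} {nu : L -> L}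
  (Hinv : forall a, nu (nu a) = a)
  (Hjoin : forall a b, nu (a `|` b) = nu a `&` nu b) (a b : L) :
  nu (a `&` b) = nu a `|` nu b.
Proof.
have E : nu (nu a `|` nu b) = a `&` b by rewrite Hjoin !Hinv.
by rewrite -E Hinv.
Qed.

Lemma inv_join {d} {L : tbLatticeType d} {nu : L -> L}
  (Hanti : forall a b : L, a <= b -> nu b <= nu a)
  (Hinv : forall a, nu (nu a) = a) (a b : L) :
  nu (a `|` b) = nu a `&` nu b.
Proof.
apply: le_anti; apply/andP; split.
  rewrite lexI; apply/andP; split; apply: Hanti; [exact: leUl|exact: leUr].
have h : a `|` b <= nu (nu a `&` nu b).
  rewrite leUx; apply/andP; split.
  - by have := Hanti _ _ (leIl (nu a) (nu b)); rewrite Hinv.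
  - by have := Hanti _ _ (leIr (nu b) (nu a)); rewrite Hinv.
by have := Hanti _ _ h; rewrite Hinv.
Qed.

Lemma filter_of {d} {L : tbLatticeType d} {nu : L -> L}
  (Hanti : forall a b : L, a <= b -> nu b <= nu a)
  (Hbot : nu \bot = \top) (Hinv : forall a, nu (nu a) = a)
  (Hjoin : forall a b, nu (a `|` b) = nu a `&` nu b) (y : @FY d L) :
  proper_filter (fun c => proj1_sig y (nu c)).
Proof.
split; [split; [|split]|].
- have -> : nu \top = \bot by rewrite -Hbot Hinv.
  exact: fy_bot.
- move=> a b ya ab; exact: fy_down ya (Hanti _ _ ab).
- move=> a b ya yb; rewrite (inv_meet Hinv Hjoin); exact: fy_join.
- rewrite Hbot; exact: fy_ntop.
Qed.

Lemma star_inv {d} {L : tbLatticeType d} {nu : L -> L}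
  (Hanti : forall a b : L, a <= b -> nu b <= nu a)
  (Hbot : nu \bot = \top) (Hinv : forall a, nu (nu a) = a)
  (Hjoin : forall a b, nu (a `|` b) = nu a `&` nu b) (A : @FX d L -> Prop) :
  stable A -> gstar nu (gstar nu A) = A.
Proof.
move=> HA; apply: pext => x; split; last first.
  apply: star_G => // a; rewrite Hinv; exact: lexx.
move=> Hx; rewrite HA => y Hy; apply: NNPP => Hn.
pose z := exist _ _ (filter_of Hanti Hbot Hinv Hjoin y).
have Hz : gstar nu A z.
  move=> w Aw; apply/(perp_char Hanti z w).
  have [c [wc yc]] := Hy w Aw.
  exists c; split => //=; by rewrite Hinv.
have [c [zc xc]] := proj1 (perp_char Hanti x z) (Hx z Hz).
apply: Hn; exists (nu c); split => //.
Qed.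

Lemma star_O {d} {L : tbLatticeType d} {nu : L -> L}
  (Hanti : forall a b : L, a <= b -> nu b <= nu a)
  (Ho : forall a, a `&` nu a = \bot) (A : @FX d L -> Prop) :
  gmeet A (gstar nu A) = gbot.
Proof.
apply: pext => x; split => // [[Ax Hx]].
have [c [xc xnc]] := proj1 (perp_char Hanti x x) (Hx x Ax).
apply (fx_nbot x); rewrite -(Ho c); exact: fx_meet.
Qed.

Lemma G_dist {d} {L : tbLatticeType d}
  (Hd : forall a b c : L, a `&` (b `|` c) = (a `&` b) `|` (a `&` c)) :
  distributive_on (@stable d L) (@gmeet d L) (@gjoin d L).
Proof.
move=> A B C HA HB HC; apply: pext => x; split; last first.
  move=> Hx; split.
  - apply: cl_least HA _ x Hx => w [[]|[]] //.
  - apply: cl_mono _ x Hx => w [[_ h]|[_ h]]; by [left|right].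
move=> [Ax Hx] y Hy; apply: NNPP => Hn.
pose Y := fun b : L => exists a, proj1_sig x a /\ proj1_sig y (a `&` b).
have HY : proper_ideal Y.
  split; [split; [|split]|].
  - exists \top; split; first exact: fx_top.
    apply: fy_down (fy_bot y) _; exact: leIr.
  - move=> a b [c [xc yc]] ab; exists c; split => //.
    apply: fy_down yc _; exact: leI2 (lexx _) ab.
  - move=> a b [c1 [x1 y1]] [c2 [x2 y2]]; exists (c1 `&` c2); split.
      exact: fx_meet.
    rewrite Hd; apply: fy_join.
    + apply: fy_down y1 _; exact: leI2 (leIl _ _) (lexx _).
    + apply: fy_down y2 _; exact: leI2 (leIr _ _) (lexx _).
  - move=> [c [xc yc]]; apply: Hn; exists (c `&` \top); split => //.
    apply: fx_up xc _; rewrite lexI lexx lex1 //.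
have HYp : primeX (fun w => B w \/ C w) (exist _ Y HY).
  move=> z Hz; apply: NNPP => Hnp.
  pose F := fun c : L => exists a b, proj1_sig x a /\ proj1_sig z b /\ a `&` b <= c.
  have Fbot : ~ F \bot.
    move=> [a [b [xa [zb le]]]]; apply: Hnp; exists b; split => //=.
    exists a; split => //; exact: fy_down (fy_bot y) le.
  have HF : proper_filter F.
    split; [split; [|split]|] => //.
    - exists \top, \top; do !split; [exact: fx_top|exact: fx_top|exact: lex1].
    - move=> a b [a1 [b1 [x1 [z1 l1]]]] ab; exists a1, b1; do !split => //.
      exact: le_trans l1 ab.
    - move=> a b [a1 [b1 [x1 [z1 l1]]]] [a2 [b2 [x2 [z2 l2]]]].
      exists (a1 `&` a2), (b1 `&` b2); do !split; try exact: fx_meet.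
      rewrite lexI; apply/andP; split.
      + apply: le_trans l1; apply: leI2; exact: leIl.
      + apply: le_trans l2; apply: leI2; exact: leIr.
  pose xz := exist _ F HF.
  have xF : forall a, proj1_sig x a -> proj1_sig xz a.
    move=> a xa; exists a, \top; do !split => //; [exact: fx_top|exact: leIl].
  have zF : forall a, proj1_sig z a -> proj1_sig xz a.
    move=> a za; exists \top, a; do !split => //; [exact: fx_top|exact: leIr].
  have Axz : A xz by apply: stable_up HA Ax xF.
  have Hxz : (gmeet A B xz \/ gmeet A C xz).
    case: Hz => Hz; [left|right]; split => //; [exact: stable_up HB Hz zF|
      exact: stable_up HC Hz zF].
  have [c [[a [b [xa [zb le]]]] yc]] := Hy xz Hxz.
  apply: Hnp; exists b; split => //=; exists a; split => //; exact: fy_down yc le.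
have [a [xa [c [xc yc]]]] := Hx _ HYp.
apply: Hn; exists (c `&` a); split => //; exact: fx_meet.
Qed.

Lemma star_BA {d} {L : tbLatticeType d} {nu : L -> L}
  (Hanti : forall a b : L, a <= b -> nu b <= nu a)
  (Hbot : nu \bot = \top) (Hinv : forall a, nu (nu a) = a)
  (Hjoin : forall a b, nu (a `|` b) = nu a `&` nu b)
  (Ht : forall a, a `|` nu a = \top) (A : @FX d L -> Prop) :
  gjoin A (gstar nu A) = gtop.
Proof.
apply: pext => x; split => // _ y Hy; apply: NNPP => Hn.
pose z := exist _ _ (filter_of Hanti Hbot Hinv Hjoin y).
have Hz : gstar nu A z.
  move=> w Aw; apply/(perp_char Hanti z w).
  have [c [wc yc]] := Hy w (or_introl Aw).
  exists c; split => //=; by rewrite Hinv.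
have [c [/= ync yc]] := Hy z (or_intror Hz).
apply (fy_ntop y); rewrite -(Ht c); exact: fy_join.
Qed.

Lemma key_le {d} {L : tbLatticeType d}
  (Hd : forall a b c : L, a `&` (b `|` c) = (a `&` b) `|` (a `&` c)) (p q r : L) :
  p `&` q = \bot -> q `|` r = \top -> p <= r.
Proof.
move=> H1 H2.
have -> : p = p `&` r by rewrite -[p in LHS]meetx1 -H2 Hd H1 join0x.
exact: leIr.
Qed.

Theorem theorem5p4 (d : Order.disp_t) (L : tbLatticeType d) (nu : L -> L)
    (V : variety) :
  in_variety V (fun _ : L => True) (fun a b : L => (a <= b)%O)
    Order.meet Order.join \bot \top nu ->
  in_variety V (@stable d L) (@gsub d L) (@gmeet d L) (@gjoin d L)
    (@gbot d L) (@gtop d L) (gstar nu).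
Proof.
have Mof : M_axioms (fun _ : L => True) (fun a b : L => (a <= b)%O)
    Order.meet Order.join \bot \top nu ->
    (forall a b : L, a <= b -> nu b <= nu a) /\ nu \bot = \top /\
    (forall a b, nu (a `|` b) = nu a `&` nu b).
  move=> [_ [Ha [Hb Hj]]]; split; [|split] => //.
  - move=> a b; exact: Ha.
  - move=> a b; exact: Hj.
case: V => [] [_ H]; split; try exact: G_bl.
- have [Ha [Hb Hj]] := Mof H; exact: star_M.
- have [Ha [Hb Hj]] := Mof (proj1 H); split; first exact: star_M.
  move=> A _; apply: star_G => // a; exact: (proj2 H a I).
- have [Ha [Hb Hj]] := Mof (proj1 H); split; first exact: star_M.
  move=> A HA; apply: star_inv => // a; exact: (proj2 H a I).
- case: H => HM [Hi Hd].
  have [Ha [Hb Hj]] := Mof HM; split; first exact: star_M.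
  split; first by move=> A HA; apply: star_inv => // a; exact: Hi.
  apply: G_dist => a b c; exact: Hd.
- case: H => HM [Hi Ho].
  have [Ha [Hb Hj]] := Mof HM; split; first exact: star_M.
  split; first by move=> A HA; apply: star_inv => // a; exact: Hi.
  move=> A _; apply: star_O => // a; exact: Ho.
- case: H => _ [Hd Hc].
  have Hd' : forall a b c : L, a `&` (b `|` c) = (a `&` b) `|` (a `&` c).
    move=> a b c; exact: Hd.
  have Hm : forall a, a `&` nu a = \bot by move=> a; case: (Hc a I).
  have Hu : forall a, a `|` nu a = \top by move=> a; case: (Hc a I).
  have Hinv : forall a, nu (nu a) = a.
    move=> a; apply: le_anti; apply/andP; split.
    - apply: (key_le Hd' _ (nu a)); [by rewrite meetC Hm | by rewrite joinC Hu].
    - apply: (key_le Hd' _ (nu a)); [exact: Hm | exact: Hu].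
  have Ha : forall a b : L, a <= b -> nu b <= nu a.
    move=> a b ab; apply: (key_le Hd' _ a); last exact: Hu.
    apply: le_anti; rewrite le0x andbT -(Hm b) meetC.
    apply: leI2 => //; exact: lexx.
  have Hb : nu \bot = \top by rewrite -(Hu \bot) join0x.
  have Hj := inv_join Ha Hinv.
  split; first by move=> A _; exact: star_stable.
  split; first exact: G_dist.
  move=> A _; split; [exact: star_O | exact: star_BA].
Qed.
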